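(* Let $(X,p)$ be a complete partial metric space and $(Y,s)$ a strong partial metric space, and let $f,g:X\to Y$ be sequentially continuous. Suppose $g$ is consistent and there are real numbers $r$, $A\ge0$ and $0<c<1$ such that for every $x\in X$ there exists $z\in X$ with $$s(f(z),g(z))-s(f(z),f(z))\le c[s(f(x),g(x))-s(f(x),f(x))]$$ and $$r\le p(z,z)\le p(x,z)\le r+A[s(f(x),g(x))-s(f(x),f(x))]$$ (i.e. $f$ and $g$ are $f$-mutually $c_r$-contractive). Then $f$ and $g$ have a coincidence point, i.e. there is $a\in X$ with $f(a)=g(a)$.
   Context: A partial metric on $X$ is $p:X\times X\to\mathbb{R}$ with, for all $x,y,z$: $p(x,x)\le p(x,y)$; $p(x,y)=p(y,x)$; $p(x,x)=p(x,y)=p(y,y)$ iff $x=y$; $p(x,y)\le p(x,z)+p(z,y)-p(z,z)$. A strong partial metric on $Y$ is $s:Y\times Y\to\mathbb{R}$ with $s(u,u)<s(u,v)$ for $u\neq v$, $s(u,v)=s(v,u)$, and $s(u,v)\le s(u,w)+s(w,v)-s(w,w)$. For such $q\in\{p,s\}$ the topology is generated by the balls $\{y\mid q(x,y)-q(x,x)<\epsilon\}$, so $a$ is a limit of $\{x_i\}$ iff for every $\epsilon>0$ there is $N$ with $q(a,x_i)-q(a,a)<\epsilon$ for all $i>N$. $\{x_i\}$ is Cauchy with central distance $r$ if for every $\epsilon>0$ there is $N$ with $|p(x_i,x_j)-r|<\epsilon$ for $i\ge j>N$; a special limit is a limit $a$ with $p(a,a)=r$; $(X,p)$ is complete if every Cauchy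 sequence has a special limit. A map $f:X\to Y$ is sequentially continuous if whenever $a$ is a limit of $\{x_i\}$, $f(a)$ is a limit of $\{f(x_i)\}$. $g$ is consistent if for all $x,z\in X$, $p(x,x)\le p(z,z)$ implies $s(g(x),g(x))\le s(g(z),g(z))$. *)

(* Defs.v *)
From Stdlib Require Import Reals.
Open Scope R_scope.

Definition is_partial_metric {X : Type} (p : X -> X -> R) : Prop :=
  (forall x y, p x x <= p x y) /\
  (forall x y, p x y = p y x) /\
  (forall x y, (p x x = p x y /\ p x y = p y y) <-> x = y) /\
  (forall x y z, p x y <= p x z + p z y - p z z).

Definition is_strong_partial_metric {Y : Type} (s : Y -> Y -> R) : Prop :=
  (forall u v, u <> v -> s u u < s u v) /\
  (forall u v, s u v = s v u) /\
  (forall u v w, s u v <= s u w + s w v - s w w).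

Definition is_limit {X : Type} (q : X -> X -> R) (x : nat -> X) (a : X) : Prop :=
  forall eps, eps > 0 -> exists N : nat, forall i, (i > N)%nat ->
    q a (x i) - q a a < eps.

Definition cauchy_central {X : Type} (p : X -> X -> R) (x : nat -> X) (r : R) : Prop :=
  forall eps, eps > 0 -> exists N : nat, forall i j, (i >= j)%nat -> (j > N)%nat ->
    Rabs (p (x i) (x j) - r) < eps.

Definition is_cauchy {X : Type} (p : X -> X -> R) (x : nat -> X) : Prop :=
  exists r, cauchy_central p x r.

Definition pm_complete {X : Type} (p : X -> X -> R) : Prop :=
  forall (x : nat -> X) (r : R), cauchy_central p x r ->
    exists a, is_limit p x a /\ p a a = r.

Definition seq_continuous {X Y : Type} (p : X -> X -> R) (s : Y -> Y -> R)
  (f : X -> Y) : Prop :=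
  forall (x : nat -> X) (a : X), is_limit p x a -> is_limit s (fun i => f (x i)) (f a).

Definition consistent {X Y : Type} (p : X -> X -> R) (s : Y -> Y -> R)
  (g : X -> Y) : Prop :=
  forall x z, p x x <= p z z -> s (g x) (g x) <= s (g z) (g z).

(* Main.v *)
Require Import Defs.
From Stdlib Require Import Reals Lra Lia Classical ClassicalEpsilon.
Open Scope R_scope.

Theorem theorem7p19 (X Y : Type) (p : X -> X -> R) (s : Y -> Y -> R)
  (f g : X -> Y) (r A c : R) :
  inhabited X ->
  is_partial_metric p -> pm_complete p ->
  is_strong_partial_metric s ->
  seq_continuous p s f -> seq_continuous p s g ->
  consistent p s g ->
  0 <= A -> 0 < c -> c < 1 ->
  (forall x : X, exists z : X,
      s (f z) (g z) - s (f z) (f z) <= c * (s (f x) (g x) - s (f x) (f x)) /\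
      r <= p z z /\ p z z <= p x z /\
      p x z <= r + A * (s (f x) (g x) - s (f x) (f x))) ->
  exists a : X, f a = g a.
Proof.
  intros [x0] [p1 [p2 [p3 p4]]] Hcomp [s1 [s2 s3]] Hf Hg Hcons HA Hc0 Hc1 H.
  set (d := fun x => s (f x) (g x) - s (f x) (f x)).
  set (F := fun x => proj1_sig (constructive_indefinite_description _ (H x))).
  assert (HF : forall x, d (F x) <= c * d x /\ r <= p (F x) (F x) /\
     p (F x) (F x) <= p x (F x) /\ p x (F x) <= r + A * d x).
  { intro x. unfold F. destruct (constructive_indefinite_description _ (H x)) as [z Hz].
    simpl. exact Hz. }
  clearbody F.
  assert (dpos : forall x, 0 <= d x).
  { intro x. unfold d. destruct (classic (f x = g x)) as [E|E].
    - rewrite E. lra.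
    - pose proof (s1 _ _ E). lra. }
  set (xs := fun n => Nat.iter n F x0).
  assert (xsS : forall n, xs (S n) = F (xs n)) by reflexivity.
  set (D0 := d x0).
  assert (HD : forall n, d (xs n) <= c ^ n * D0).
  { induction n.
    - simpl. unfold D0. lra.
    - rewrite xsS. destruct (HF (xs n)) as [h _]. simpl.
      assert (c * d (xs n) <= c * (c ^ n * D0)) by (apply Rmult_le_compat_l; lra).
      lra. }
  set (K := A * D0).
  assert (HK : 0 <= K) by (unfold K, D0; pose proof (dpos x0); nra).
  assert (cpos : forall n, 0 <= c ^ n) by (intro; apply pow_le; lra).
  assert (Hstep : forall n, r <= p (xs (S n)) (xs (S n)) /\
        p (xs (S n)) (xs (S n)) <= p (xs n) (xs (S n)) /\
        p (xs n) (xs (S n)) <= r + K * c ^ n).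
  { intro n. rewrite xsS. destruct (HF (xs n)) as [_ [h1 [h2 h3]]].
    pose proof (HD n).
    assert (A * d (xs n) <= A * (c ^ n * D0)) by (apply Rmult_le_compat_l; lra).
    unfold K. repeat split; try lra. }
  assert (H4 : forall m j, p (xs j) (xs (j + S m)%nat) <= r + K * c ^ j / (1 - c)).
  { induction m; intro j.
    - replace (j + 1)%nat with (S j) by lia.
      destruct (Hstep j) as [_ [_ h]].
      assert (K * c ^ j <= K * c ^ j / (1 - c)).
      { unfold Rdiv. rewrite <- (Rmult_1_r (K * c ^ j)) at 1.
        apply Rmult_le_compat_l. pose proof (cpos j); nra.
        rewrite <- Rinv_1. apply Rinv_le_contravar; lra. }
      lra.
    - pose proof (p4 (xs j) (xs (j + S (S m))%nat) (xs (S j))) as T.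
      replace (j + S (S m))%nat with (S j + S m)%nat in * by lia.
      pose proof (IHm (S j)) as I.
      destruct (Hstep j) as [h0 [_ h]].
      assert (E : K * c ^ j + K * c ^ S j / (1 - c) = K * c ^ j / (1 - c)).
      { simpl. field. lra. }
      lra. }
  assert (Hcau : cauchy_central p xs r).
  { intros eps Heps.
    assert (Hy : 0 < eps * (1 - c) / (K + 1)).
    { apply Rdiv_lt_0_compat; [nra | lra]. }
    destruct (pow_lt_1_zero c ltac:(rewrite Rabs_right; lra) _ Hy) as [N HN].
    exists N. intros i j Hij Hj.
    destruct j as [|j']; [lia|].
    assert (Hc' : K * c ^ j' / (1 - c) < eps).
    { pose proof (HN j' ltac:(lia)) as h. rewrite Rabs_right in h by (apply Rle_ge; auto).
      apply Rmult_lt_compat_r with (r := K + 1) in h; [|lra].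
      unfold Rdiv in h. rewrite Rmult_assoc, Rinv_l, Rmult_1_r in h by lra.
      assert (K * c ^ j' <= (K + 1) * c ^ j') by (pose proof (cpos j'); nra).
      apply Rmult_lt_reg_r with (r := 1 - c); [lra|].
      unfold Rdiv. rewrite Rmult_assoc, Rinv_l, Rmult_1_r by lra. nra. }
    assert (Hmono : K * c ^ S j' / (1 - c) <= K * c ^ j' / (1 - c)).
    { unfold Rdiv. apply Rmult_le_compat_r.
      left; apply Rinv_0_lt_compat; lra.
      apply Rmult_le_compat_l; auto. simpl. pose proof (cpos j'). nra. }
    assert (Hbig : K * c ^ j' <= K * c ^ j' / (1 - c)).
    { unfold Rdiv. rewrite <- (Rmult_1_r (K * c ^ j')) at 1.
      apply Rmult_le_compat_l. pose proof (cpos j'); nra.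
      rewrite <- Rinv_1. apply Rinv_le_contravar; lra. }
    destruct (Hstep j') as [h1 [h2 h3]].
    destruct (Nat.eq_dec i (S j')) as [->|Hne].
    - rewrite Rabs_right; lra.
    - replace i with (S j' + S (i - S j' - 1))%nat by lia.
      pose proof (H4 (i - S j' - 1)%nat (S j')) as h4.
      rewrite p2.
      pose proof (p1 (xs (S j')) (xs (S j' + S (i - S j' - 1))%nat)).
      rewrite Rabs_right; lra. }
  destruct (Hcomp xs r Hcau) as [a [Hlim Haa]].
  exists a.
  apply NNPP. intro Hne.
  pose proof (s1 _ _ Hne) as Hlt.
  set (e := (s (f a) (g a) - s (f a) (f a)) / 3).
  assert (He : e > 0) by (unfold e; lra).
  destruct (Hf xs a Hlim e He) as [N1 HN1].
  destruct (Hg xs a Hlim e He) as [N2 HN2].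
  assert (Hy : 0 < e / (D0 + 1)).
  { apply Rdiv_lt_0_compat; [lra|]. pose proof (dpos x0); unfold D0; lra. }
  destruct (pow_lt_1_zero c ltac:(rewrite Rabs_right; lra) _ Hy) as [N3 HN3].
  set (n := S (N1 + N2 + N3)).
  pose proof (HN1 n ltac:(unfold n; lia)) as a1.
  pose proof (HN2 n ltac:(unfold n; lia)) as a2.
  pose proof (HN3 n ltac:(unfold n; lia)) as a3.
  rewrite Rabs_right in a3 by (apply Rle_ge; auto).
  assert (Hdn : d (xs n) < e).
  { pose proof (HD n). pose proof (dpos x0). fold D0 in H1.
    apply Rmult_lt_compat_r with (r := D0 + 1) in a3; [|lra].
    unfold Rdiv in a3. rewrite Rmult_assoc, Rinv_l, Rmult_1_r in a3 by lra.
    assert (c ^ n * D0 <= c ^ n * (D0 + 1)) by (pose proof (cpos n); nra).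
    lra. }
  assert (Hcg : s (g a) (g a) <= s (g (xs n)) (g (xs n))).
  { apply Hcons. unfold n. destruct (Hstep (N1 + N2 + N3)%nat) as [h _]. lra. }
  pose proof (s3 (f a) (g a) (f (xs n))) as t1.
  pose proof (s3 (f (xs n)) (g a) (g (xs n))) as t2.
  rewrite (s2 (g (xs n)) (g a)) in t2.
  unfold d in Hdn. unfold e in *. lra.
Qed.
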